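(* Let $D$ be an integral domain, $S$ a multiplicative subset of $D$, and $M$ a torsion-free $D$-module which is a $w$-module. Let $w$ denote the $w$-operation on $D$-modules and $\overline{w}$ the $w$-operation on $D_S$-modules. Let $L$ be a nonzero $D$-submodule of $M$. Then: (1) If $L$ is a $w$-submodule of $M$, then $L_S\cap M$ is a $w$-submodule of $M$. (2) If $L_S$ is a $\overline{w}$-submodule of $M_S$, then $L_S\cap M$ is a $w$-submodule of $M$. (3) $(L_w)_S\subseteq (L_S)_{\overline{w}}$ and $((L_w)_S)_{\overline{w}}=(L_S)_{\overline{w}}$.
   Context: Let $K$ be the quotient field of $D$. For a nonzero fractional ideal $I$, $I^{-1}=\{a\in K\mid aI\subseteq D\}$, $I_v=(I^{-1})^{-1}$. $J\in\mathrm{GV}(D)$ means $J$ is a finitely generated ideal of $D$ with $J_v=D$. For a torsion-free $D$-module $N$, $N_w=\{x\in N\otimes_D K\mid xJ\subseteq N\text{ for some }J\in\mathrm{GV}(D)\}$; $N$ is a $w$-module if $N_w=N$; a submodule $L$ of $M$ is a $w$-submodule if $L_w=L$. The $\overline{w}$-operation is defined analogously over the domain $D_S$ using $\mathrm{GV}(D_S)$. $M$ is identified with its image in $M_S$, and $L_S\cap M$ is taken inside $M_S$. *)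

(* Defs.v *)
From mathcomp Require Import all_boot all_algebra.
Set Implicit Arguments. Unset Strict Implicit. Unset Printing Implicit Defensive.
Import GRing.Theory.
Local Open Scope ring_scope.

Section Defs.
Variable K : fieldType.
Variable V : lmodType K.

Definition subring (R : K -> Prop) : Prop :=
  R 0 /\ R 1 /\ (forall x y, R x -> R y -> R (x - y)) /\
  (forall x y, R x -> R y -> R (x * y)).

Definition quotient_field_of (R : K -> Prop) : Prop :=
  forall x : K, exists a b, R a /\ R b /\ b != 0 /\ x = a / b.

Definition mult_subset (D S : K -> Prop) : Prop :=
  (forall s, S s -> D s) /\ S 1 /\ ~ S 0 /\
  (forall s t, S s -> S t -> S (s * t)).

Definition submodule (R : K -> Prop) (N : V -> Prop) : Prop :=
  N 0 /\ (forall x y, N x -> N y -> N (x + y)) /\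
  (forall r x, R r -> N x -> N (r *: x)).

Definition frac_inv (R I : K -> Prop) : K -> Prop :=
  fun a => forall x, I x -> R (a * x).

Definition vclos (R I : K -> Prop) : K -> Prop := frac_inv R (frac_inv R I).

Definition fg_ideal (R J : K -> Prop) : Prop :=
  exists s : seq K, (forall i : 'I_(size s), R s`_i) /\
    forall x, J x <-> exists c : 'I_(size s) -> K,
       (forall i, R (c i)) /\ x = \sum_(i < size s) c i * s`_i.

Definition GV (R J : K -> Prop) : Prop :=
  fg_ideal R J /\ (exists j, J j /\ j != 0) /\ (forall x, vclos R J x <-> R x).

(* N ⊗_R K, realised inside V as {d^{-1} n | d in R \ 0, n in N} *)
Definition tensorK (R : K -> Prop) (N : V -> Prop) : V -> Prop :=
  fun x => exists d n, R d /\ d != 0 /\ N n /\ x = d^-1 *: n.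

Definition wcl (R : K -> Prop) (N : V -> Prop) : V -> Prop :=
  fun x => tensorK R N x /\ exists J, GV R J /\ forall j, J j -> N (j *: x).

Definition is_w (R : K -> Prop) (N : V -> Prop) : Prop :=
  forall x, wcl R N x <-> N x.

Definition locR (D S : K -> Prop) : K -> Prop :=
  fun a => exists d s, D d /\ S s /\ a = d / s.

Definition locM (S : K -> Prop) (N : V -> Prop) : V -> Prop :=
  fun v => exists n s, N n /\ S s /\ v = s^-1 *: n.

End Defs.

(* Main.v *)
Require Import Defs.
From mathcomp Require Import all_boot all_algebra.
From mathcomp Require Import ring.
Import GRing.Theory.
Local Open Scope ring_scope.
Set Implicit Arguments.

Definition span {K : fieldType} (R : K -> Prop) (g : seq K) : K -> Prop :=
  fun x => exists c : 'I_(size g) -> K,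
    (forall i, R (c i)) /\ x = \sum_(i < size g) c i * g`_i.

Definition gens_in {K : fieldType} (R : K -> Prop) (g : seq K) :=
  forall a, a \in g -> R a.

Lemma sr_add {K : fieldType} {R : K -> Prop} {x y : K} :
  subring R -> R x -> R y -> R (x + y).
Proof.
move=> [R0 [R1 [Rsub Rmul]]] Rx Ry.
have -> : x + y = x - (0 - y) by rewrite sub0r opprK.
by apply Rsub => //; apply Rsub.
Qed.

Lemma span_ind {K : fieldType} (R : K -> Prop) g (P : K -> Prop) j :
  P 0 -> (forall a b, P a -> P b -> P (a + b)) ->
  (forall r a, R r -> a \in g -> P (r * a)) -> span R g j -> P j.
Proof.
move=> P0 PD Pg [c [Rc ->]]; apply: (big_ind P) => // i _.
by apply: Pg => //; apply: mem_nth.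
Qed.

Lemma span_gen {K : fieldType} {R : K -> Prop} {g : seq K} {a : K} :
  subring R -> a \in g -> span R g a.
Proof.
move=> [R0 [R1 _]] Ha.
pose i := Ordinal (introT idP (etrans (index_mem a g) Ha) : (index a g < size g)%N).
exists (fun j => (j == i)%:R); split.
  by move=> j; case: (j == i).
rewrite (bigD1 i) //= eqxx mul1r big1 ?addr0 ?nth_index //.
by move=> j /negbTE ->; rewrite mul0r.
Qed.

Lemma span0 {K : fieldType} {R : K -> Prop} {g : seq K} : subring R -> span R g 0.
Proof.
move=> [R0 _]; exists (fun _ => 0); split => //.
by rewrite big1 // => i _; rewrite mul0r.
Qed.

Lemma spanD {K : fieldType} {R : K -> Prop} {g : seq K} {a b : K} :
  subring R -> span R g a -> span R g b -> span R g (a + b).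
Proof.
move=> HR [c [Rc ->]] [c' [Rc' ->]].
exists (fun i => c i + c' i); split.
  by move=> i; apply: sr_add.
by rewrite -big_split /=; apply: eq_bigr => i _; rewrite mulrDl.
Qed.

Lemma spanM {K : fieldType} {R : K -> Prop} {g : seq K} {r a : K} :
  subring R -> R r -> span R g a -> span R g (r * a).
Proof.
move=> [R0 [R1 [Rsub Rmul]]] Rr [c [Rc ->]].
exists (fun i => r * c i); split.
  by move=> i; apply: Rmul.
by rewrite mulr_sumr; apply: eq_bigr => i _; rewrite mulrA.
Qed.

Lemma span_sub {K : fieldType} {R : K -> Prop} {g : seq K} {j : K} :
  subring R -> gens_in R g -> span R g j -> R j.
Proof.
move=> HR Hg; apply: (@span_ind _ _ _ (R)).
- by case: HR.
- by move=> a b; apply: sr_add.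
- by move=> r a Rr Ha; case: HR => [_ [_ [_ Rmul]]]; apply: Rmul => //; apply: Hg.
Qed.

Lemma span_scale_mod {K : fieldType} {V : lmodType K} {R : K -> Prop} {g : seq K}
    {N : V -> Prop} {y : V} {j : K} :
  submodule R N -> (forall a, a \in g -> N (a *: y)) -> span R g j -> N (j *: y).
Proof.
move=> [N0 [ND NZ]] Hg; apply: (@span_ind _ _ _ (fun j => N (j *: y))).
- by rewrite scale0r.
- by move=> a b Ha Hb; rewrite scalerDl; apply: ND.
- by move=> r a Rr Ha; rewrite -scalerA; apply: NZ => //; apply: Hg.
Qed.

Lemma span_mul_in {K : fieldType} {R : K -> Prop} {g : seq K} {u j : K} :
  subring R -> (forall a, a \in g -> R (u * a)) -> span R g j -> R (u * j).
Proof.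
move=> HR Hg; apply: (@span_ind _ _ _ (fun j => R (u * j))).
- by rewrite mulr0; case: HR.
- by move=> a b Ha Hb; rewrite mulrDr; apply: sr_add.
- move=> r a Rr Ha; rewrite mulrCA; case: HR => [_ [_ [_ Rmul]]].
  by apply: Rmul => //; apply: Hg.
Qed.

Lemma span_prod {K : fieldType} {R : K -> Prop} {g1 g2 : seq K} {j1 j2 : K} :
  subring R -> span R g1 j1 -> span R g2 j2 ->
  span R [seq x * y | x <- g1, y <- g2] (j1 * j2).
Proof.
move=> HR H1 H2; move: H1; apply: (@span_ind _ _ _ (fun j => span R [seq x * y | x <- g1, y <- g2] (j * j2))).
- by rewrite mul0r; apply: span0.
- by move=> a b Ha Hb; rewrite mulrDl; apply: spanD.
- move=> r a Rr Ha; rewrite -mulrA; apply: spanM => //.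
  move: H2; apply: (@span_ind _ _ _ (fun j => span R [seq x * y | x <- g1, y <- g2] (a * j))).
  + by rewrite mulr0; apply: span0.
  + by move=> b c Hb Hc; rewrite mulrDr; apply: spanD.
  + move=> r' b Rr' Hb; rewrite mulrCA; apply: spanM => //.
    by apply: span_gen => //; apply: allpairs_f.
Qed.

Lemma GV_gens {K : fieldType} (R J : K -> Prop) :
  GV R J -> exists g, gens_in R g /\ (forall x, J x <-> span R g x).
Proof.
move=> [[s [Rs Hs]] _]; exists s; split => //.
move=> a Ha; rewrite -(nth_index 0 Ha).
have Hi : (index a s < size s)%N by rewrite index_mem.
exact: (Rs (Ordinal Hi)).
Qed.

Lemma GV_sub {K : fieldType} {R J : K -> Prop} {j : K} :
  subring R -> GV R J -> J j -> R j.
Proof.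
move=> HR HJ Hj; have [g [Hg Jg]] := GV_gens HJ.
by apply: (span_sub HR Hg); apply/Jg.
Qed.

Lemma GV_inv {K : fieldType} (R J : K -> Prop) {u : K} :
  subring R -> GV R J -> (forall j, J j -> R (u * j)) -> R u.
Proof.
move=> [R0 [R1 _]] [_ [_ H]] Hu.
have := (proj2 (H 1)) R1 u Hu.
by rewrite mul1r.
Qed.

Lemma GV_of_span {K : fieldType} {R : K -> Prop} {g : seq K} :
  subring R -> gens_in R g -> (exists a, span R g a /\ a != 0) ->
  (forall u, (forall j, span R g j -> R (u * j)) -> R u) -> GV R (span R g).
Proof.
move=> HR Hg Hnz Hinv; split; last split => //.
  exists g; split => //.
  by move=> i; apply: Hg; apply: mem_nth.
move=> x; split.
  move=> Hv; have := Hv 1; rewrite mulr1; apply.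
  by move=> j Hj; rewrite mul1r; apply: (span_sub HR Hg).
move=> Rx u Hu; case: HR => [_ [_ [_ Rmul]]].
by apply: Rmul => //; apply: Hinv.
Qed.

Lemma GV_one {K : fieldType} (R : K -> Prop) :
  subring R -> GV R (span R [:: 1]).
Proof.
move=> HR; apply: GV_of_span => //.
- by move=> a; rewrite inE => /eqP ->; case: HR => [_ [R1 _]].
- by exists 1; split; [apply: span_gen => //; rewrite inE | apply: oner_neq0].
- move=> u Hu; have := Hu 1; rewrite mulr1; apply.
  by apply: span_gen => //; rewrite inE.
Qed.

Lemma prod_GV {K : fieldType} (R J1 J2 : K -> Prop) :
  subring R -> GV R J1 -> GV R J2 ->
  exists g, GV R (span R g) /\
    (forall a, a \in g -> exists j1 j2, J1 j1 /\ J2 j2 /\ a = j1 * j2).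
Proof.
move=> HR H1 H2.
have [g1 [Hg1 Jg1]] := GV_gens H1.
have [g2 [Hg2 Jg2]] := GV_gens H2.
exists [seq x * y | x <- g1, y <- g2]; split.
  apply: GV_of_span => //.
  - move=> a /allpairsP [[x y] [/= Hx Hy ->]].
    by case: HR => [_ [_ [_ Rmul]]]; apply: Rmul; [apply: Hg1 | apply: Hg2].
  - case: H1 => [_ [[j1 [Hj1 nz1]] _]]; case: H2 => [_ [[j2 [Hj2 nz2]] _]].
    exists (j1 * j2); split; last by apply: mulf_neq0.
    by apply: span_prod => //; [apply/Jg1 | apply/Jg2].
  - move=> u Hu; apply: (GV_inv HR H1) => j1 Hj1.
    apply: (GV_inv HR H2) => j2 Hj2; rewrite -mulrA; apply: Hu.
    by apply: span_prod => //; [apply/Jg1 | apply/Jg2].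
move=> a /allpairsP [[x y] [/= Hx Hy ->]].
exists x, y; split; first by apply/Jg1; apply: span_gen.
by split => //; apply/Jg2; apply: span_gen.
Qed.

Lemma GV_nz_gen {K : fieldType} {R J : K -> Prop} {g : seq K} :
  GV R J -> (forall x, J x <-> span R g x) -> exists a, a \in g /\ a != 0.
Proof.
move=> [_ [[j [Hj nz]] _]] Jg.
case: (boolP (has (fun a => a != 0) g)) => [/hasP [a Ha Hna] | /hasPn Hall].
  by exists a.
have : j = 0.
  move: (proj1 (Jg j) Hj); apply: (@span_ind _ _ _ (fun j => j = 0)) => //.
  - by move=> a b -> ->; rewrite addr0.
  - by move=> r a _ Ha; have := Hall a Ha; rewrite negbK => /eqP ->; rewrite mulr0.
by move=> E; rewrite E eqxx in nz.
Qed.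

Lemma S_neq0 {K : fieldType} (D S : K -> Prop) {s : K} :
  mult_subset D S -> S s -> s != 0.
Proof. by move=> [_ [_ [S0 _]]] Ss; apply/eqP => E; rewrite E in Ss. Qed.

Lemma locR_sub {K : fieldType} (D S : K -> Prop) :
  subring D -> mult_subset D S -> subring (locR D S).
Proof.
move=> [D0 [D1 [Dsub Dmul]]] HS.
have HS' := HS; case: HS' => [SD [S1 [_ Smul]]].
split; first by exists 0, 1; rewrite mul0r.
split; first by exists 1, 1; rewrite divr1.
split.
  move=> x y [d [s [Dd [Ss ->]]]] [d' [s' [Dd' [Ss' ->]]]].
  have s0 := S_neq0 HS Ss; have s0' := S_neq0 HS Ss'.
  exists (d * s' - d' * s), (s * s'); split; last split.
  - by apply: Dsub; apply: Dmul => //; apply: SD.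
  - by apply: Smul.
  - by field; apply/andP.
move=> x y [d [s [Dd [Ss ->]]]] [d' [s' [Dd' [Ss' ->]]]].
have s0 := S_neq0 HS Ss; have s0' := S_neq0 HS Ss'.
exists (d * d'), (s * s'); split; last split.
- by apply: Dmul.
- by apply: Smul.
- by field; apply/andP.
Qed.

Lemma D_in_locR {K : fieldType} {D S : K -> Prop} {d : K} :
  mult_subset D S -> D d -> locR D S d.
Proof. by move=> [_ [S1 _]] Dd; exists d, 1; rewrite divr1. Qed.

Lemma locM_iff {K : fieldType} {V : lmodType K} (D S : K -> Prop) (N : V -> Prop) {v : V} :
  mult_subset D S -> locM S N v <-> exists s, S s /\ N (s *: v).
Proof.
move=> HS; split.
  move=> [n [s [Nn [Ss ->]]]]; exists s; split => //.
  by rewrite scalerA mulfV ?scale1r //; apply: (S_neq0 HS).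
move=> [s [Ss Hs]]; exists (s *: v), s; split => //; split => //.
by rewrite scalerA mulVf ?scale1r //; apply: (S_neq0 HS).
Qed.

Lemma locM_sub {K : fieldType} {V : lmodType K} (D S : K -> Prop) (N : V -> Prop) :
  subring D -> mult_subset D S -> submodule D N -> submodule (locR D S) (locM S N).
Proof.
move=> [D0 [D1 [Dsub Dmul]]] HS [N0 [ND NZ]].
have HS' := HS; case: HS' => [SD [S1 [_ Smul]]].
split; first by exists 0, 1; rewrite scaler0.
split.
  move=> x y [n [s [Nn [Ss ->]]]] [m [t [Nm [St ->]]]].
  have s0 := S_neq0 HS Ss; have t0 := S_neq0 HS St.
  exists (t *: n + s *: m), (s * t); split; last split.
  - by apply: ND; apply: NZ => //; apply: SD.
  - by apply: Smul.
  - rewrite scalerDr !scalerA; congr (_ *: _ + _ *: _); field; by apply/andP.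
move=> r x [d [s' [Dd [Ss' ->]]]] [n [t [Nn [St ->]]]].
have s0 := S_neq0 HS Ss'; have t0 := S_neq0 HS St.
exists (d *: n), (s' * t); split; last split.
- by apply: NZ.
- by apply: Smul.
- rewrite !scalerA; congr (_ *: _); field; by apply/andP.
Qed.

Lemma common_den {K : fieldType} (D S : K -> Prop) (Q : K -> K -> Prop) (g : seq K) :
  mult_subset D S ->
  (forall s t a, S t -> Q s a -> Q (t * s) a) ->
  (forall a, a \in g -> exists s, S s /\ Q s a) ->
  exists s, S s /\ forall a, a \in g -> Q s a.
Proof.
move=> [_ [S1 [_ Smul]]] Hup; elim: g => [|b g IH] H.
  by exists 1; split.
have [s [Ss Hs]] := H b (mem_head b g).
have [t [St Ht]] : exists t, S t /\ forall a, a \in g -> Q t a.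
  by apply: IH => a Ha; apply: H; rewrite in_cons Ha orbT.
exists (s * t); split; first by apply: Smul.
move=> a; rewrite in_cons => /orP [/eqP -> | Ha].
  by rewrite mulrC; apply: Hup.
by apply: Hup => //; apply: Ht.
Qed.

Lemma GV_ext {K : fieldType} (D S J : K -> Prop) :
  subring D -> mult_subset D S -> GV D J ->
  exists g, gens_in D g /\ (forall x, J x <-> span D g x) /\
    GV (locR D S) (span (locR D S) g).
Proof.
move=> HD HS HJ.
have [g [Hg Jg]] := GV_gens HJ.
have HDS := locR_sub HD HS.
have HD' := HD; case: HD' => [D0 [D1 [Dsub Dmul]]].
have HS' := HS; case: HS' => [SD [S1 [_ Smul]]].
exists g; split => //; split => //.
apply: GV_of_span => //.
- by move=> a Ha; apply: D_in_locR => //; apply: Hg.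
- have [a [Ha nz]] := GV_nz_gen HJ Jg.
  by exists a; split => //; apply: span_gen.
move=> u Hu.
have [s [Ss Hs]] : exists s, S s /\ forall a, a \in g -> D (s * (u * a)).
  apply: (common_den (D:=D)) => //.
    by move=> s t a St Hsa; rewrite -mulrA; apply: Dmul => //; apply: SD.
  move=> a Ha; have [d [s [Dd [Ss E]]]] := Hu a (span_gen HDS Ha).
  exists s; split => //; rewrite E.
  have s0 := S_neq0 HS Ss.
  by have -> : s * (d / s) = d by field.
have Dsu : D (s * u).
  apply: (GV_inv HD HJ) => j Hj.
  apply: (span_mul_in HD) (proj1 (Jg j) Hj) => a Ha.
  by rewrite -mulrA; apply: Hs.
exists (s * u), s; split => //; split => //.
have s0 := S_neq0 HS Ss; by field.
Qed.

Lemma wcl_refl {K : fieldType} {V : lmodType K} {R : K -> Prop} {N : V -> Prop} {x : V} :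
  subring R -> submodule R N -> N x -> wcl R N x.
Proof.
move=> HR HN Nx; split.
  exists 1, x; split; first by case: HR => [_ [R1 _]].
  by split; [apply: oner_neq0 | split => //; rewrite invr1 scale1r].
exists (span R [:: 1]); split; first by apply: GV_one.
move=> j Hj; apply: (span_scale_mod HN) Hj => a.
by rewrite inE => /eqP ->; rewrite scale1r.
Qed.

Lemma wcl_mono {K : fieldType} {V : lmodType K} {R : K -> Prop} {N1 N2 : V -> Prop} {x : V} :
  (forall y, N1 y -> N2 y) -> wcl R N1 x -> wcl R N2 x.
Proof.
move=> H [[d [n [Rd [dn [Nn E]]]]] [J [HJ HJN]]]; split.
  by exists d, n; split => //; split => //; split => //; apply: H.
by exists J; split => // j Hj; apply: H; apply: HJN.
Qed.

Lemma wcl_idem {K : fieldType} {V : lmodType K} {R J : K -> Prop} {N : V -> Prop} {x : V} :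
  subring R -> submodule R N -> tensorK R N x -> GV R J ->
  (forall j, J j -> wcl R N (j *: x)) -> wcl R N x.
Proof.
move=> HR HN Hx HJ H.
have HN' := HN; case: HN' => [N0 [ND NZ]].
have [g [Hg Jg]] := GV_gens HJ.
have claim : forall n, (n <= size g)%N -> exists P, GV R P /\
    (forall k, (k < n)%N -> forall p, P p -> N (p *: (g`_k *: x))).
  elim => [|n IH] Hn; first by exists J; split.
  have [P [HP HPN]] := IH (ltnW Hn).
  have Jgn : J g`_n by apply/Jg; apply: span_gen => //; apply: mem_nth.
  have [_ [Jn [HJn HJnN]]] := H _ Jgn.
  have [g' [HG Hstr]] := prod_GV HR HP HJn.
  exists (span R g'); split => // k Hk p Hp.
  apply: (span_scale_mod HN) Hp => a Ha.
  have [j1 [j2 [Pj1 [Jj2 ->]]]] := Hstr a Ha.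
  move: Hk; rewrite ltnS leq_eqVlt => /orP [/eqP -> | Hk].
    rewrite -scalerA; apply: NZ; first by apply: (GV_sub HR HP).
    by apply: HJnN.
  rewrite mulrC -scalerA; apply: NZ; first by apply: (GV_sub HR HJn).
  by apply: HPN.
have [P [HP HPN]] := claim (size g) (leqnn _).
have [g'' [HG Hstr]] := prod_GV HR HP HJ.
split => //; exists (span R g''); split => // j Hj.
apply: (span_scale_mod HN) Hj => a Ha.
have [p [j' [Pp [Jj' ->]]]] := Hstr a Ha.
rewrite mulrC -scalerA.
apply: (span_scale_mod HN) (proj1 (Jg j') Jj') => b Hb.
rewrite scalerA mulrC -scalerA -(nth_index 0 Hb).
by apply: HPN => //; rewrite index_mem.
Qed.

Unset Implicit Arguments.

Theorem lemma3p2 (K : fieldType) (V : lmodType K) (D S : K -> Prop)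
    (M L : V -> Prop) :
  subring D -> quotient_field_of D -> mult_subset D S ->
  submodule D M -> is_w D M ->
  submodule D L -> (forall x, L x -> M x) -> (exists x, L x /\ x != 0) ->
  (is_w D L -> is_w D (fun x => locM S L x /\ M x)) /\
  (is_w (locR D S) (locM S L) -> is_w D (fun x => locM S L x /\ M x)) /\
  ((forall x, locM S (wcl D L) x -> wcl (locR D S) (locM S L) x) /\
   (forall x, wcl (locR D S) (locM S (wcl D L)) x <->
              wcl (locR D S) (locM S L) x)).
Proof.
move=> HD _ HS HM HwM HL LM _.
have HD' := HD; case: HD' => [D0 [D1 [Dsub Dmul]]].
have HS' := HS; case: HS' => [SD [S1 [S0 Smul]]].
have HL' := HL; case: HL' => [L0 [LD LZ]].
have HM' := HM; case: HM' => [M0 [MD MZ]].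
have HDS := locR_sub HD HS.
have subLS := locM_sub HD HS HL.
have subLSD : submodule D (locM S L).
  case: subLS => [A [B C]]; split => //; split => // r y Dr Hy.
  by apply: C => //; apply: D_in_locR.
set N' := fun x => locM S L x /\ M x.
have subN' : submodule D N'.
  case: subLSD => [A [B C]]; split; first by split.
  split; first by move=> x y [? ?] [? ?]; split; [apply: B | apply: MD].
  by move=> r y Dr [? ?]; split; [apply: C | apply: MZ].
have Mpart : forall x, wcl D N' x -> M x.
  by move=> x Hx; apply/HwM; apply: (wcl_mono _ Hx) => y [].
have Nrefl : forall x, N' x -> wcl D N' x.
  by move=> x; apply: wcl_refl.
have P3a : forall x, locM S (wcl D L) x -> wcl (locR D S) (locM S L) x.
  move=> x [y [s [[[d [n [Dd [dnz [Ln Ey]]]]] [J [HJ HJL]]] [Ss ->]]]].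
  have s0 := S_neq0 HS Ss.
  split.
    exists (s * d), n; split; first by apply: D_in_locR => //; apply: Dmul => //; apply: SD.
    split; first by apply: mulf_neq0.
    split; first by exists n, 1; split => //; split => //; rewrite invr1 scale1r.
    by rewrite Ey scalerA invfM.
  have [g [Hg [Jg HGS]]] := GV_ext HD HS HJ.
  exists (span (locR D S) g); split => // j Hj.
  apply: (span_scale_mod subLS) Hj => a Ha.
  exists (a *: y), s; split; first by apply: HJL; apply/Jg; apply: span_gen.
  by split => //; rewrite !scalerA mulrC.
split; last split; last split.
- move=> HwL x; split; last by apply: Nrefl.
  move=> Hx; split; last by apply: Mpart.
  move: Hx => [[d [n [Dd [dnz [[Ln Mn] Ex]]]]] [J [HJ HJN]]].
  have [g [Hg Jg]] := GV_gens HJ.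
  have [s [Ss Hs]] : exists s, S s /\ forall a, a \in g -> L (s *: (a *: x)).
    apply: (common_den (D:=D)) => //.
      by move=> s t a St Hsa; rewrite -scalerA; apply: LZ => //; apply: SD.
    move=> a Ha; have [Hl _] := HJN a (proj2 (Jg a) (span_gen HD Ha)).
    by apply/(locM_iff (D:=D)).
  apply/(locM_iff (D:=D)) => //; exists s; split => //.
  apply/HwL; move: Ln => [l [t [Ll [St El]]]].
  have t0 := S_neq0 HS St.
  split.
    exists (d * t), (s *: l); split; first by apply: Dmul => //; apply: SD.
    split; first by apply: mulf_neq0.
    split; first by apply: LZ => //; apply: SD.
    rewrite Ex El !scalerA invfM; congr (_ *: _); by rewrite mulrC.
  exists J; split => // j Hj.
  apply: (span_scale_mod HL) (proj1 (Jg j) Hj) => a Ha.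
  by rewrite scalerA mulrC -scalerA; apply: Hs.
- move=> Hw x; split; last by apply: Nrefl.
  move=> Hx; split; last by apply: Mpart.
  apply/Hw.
  move: Hx => [[d [n [Dd [dnz [[Ln Mn] Ex]]]]] [J [HJ HJN]]].
  split; first by exists d, n; split; first by apply: D_in_locR.
  have [g [Hg [Jg HGS]]] := GV_ext HD HS HJ.
  exists (span (locR D S) g); split => // j Hj.
  apply: (span_scale_mod subLS) Hj => a Ha.
  by have [] := HJN a (proj2 (Jg a) (span_gen HD Ha)).
- exact: P3a.
move=> x; split.
  move=> [[d [n [Dd [dnz [Hn Ex]]]]] [J [HJ HJx]]].
  apply: (wcl_idem (J:=J)) => //.
    have [[e [m [De [enz [Hm Em]]]]] _] := P3a n Hn.
    exists (d * e), m; split; first by case: HDS => [_ [_ [_ Rmul]]]; apply: Rmul.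
    split; first by apply: mulf_neq0.
    by split => //; rewrite Ex Em scalerA invfM.
  by move=> j Hj; apply: P3a; apply: HJx.
apply: wcl_mono => y [n [s [Ln [Ss ->]]]].
by exists n, s; split => //; apply: wcl_refl.
Qed.
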